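(* Fix a tomographically complete measurement $\mu^\diamond$ on $\mathcal X=\mathbb C^n$ with finite outcome set $\mathcal Y$. Let $\Gamma:\mathrm{Dens}(\mathcal X)\to\mathcal R$ be a quantum property and $\Gamma^\diamond:\mathcal P^\diamond\to\mathcal R$ be $\Gamma^\diamond(p)=\Gamma(\phi^+p)$. Then $\Gamma$ is elicitable (by a quantum score) if and only if $\Gamma^\diamond$ is elicitable (by a classical scoring rule on $\mathcal P^\diamond$), and for $\mathcal R\subseteq\mathbb R^k$, $\Gamma$ is identifiable if and only if $\Gamma^\diamond$ is identifiable.
   Context: $\mathrm{Herm}(\mathcal X)$ the Hermitian matrices with $\langle X,Y\rangle=\mathrm{Tr}(X^*Y)$, $\mathrm{Dens}(\mathcal X)$ the density matrices. A measurement $\mu=\{\mu_y\}_{y\in\mathcal Y}$ is a family of positive semidefinite operators with $\sum_y\mu_y=I$; tomographically complete if its real span is $\mathrm{Herm}(\mathcal X)$. Let $\phi:\mathrm{Herm}(\mathcal X)\to\mathbb R^{\mathcal Y}$, $(\phi X)_y=\langle\mu^\diamond_y,X\rangle$ (injective), $\phi^+$ its Moore–Penrose pseudoinverse (a linear left inverse), and $\mathcal P^\diamond=\phi(\mathrm{Dens}(\mathcal X))\subseteq\Delta_{\mathcal Y}$. A quantum property is any map $\Gamma:\mathrm{Dens}(\mathcal X)\to\mathcal R$. A quantum score for reports in $\mathcal R$ is $S=(s,\mu)$ with $s:\mathcal R\times\mathbb N\to\mathbb R$, $\mu:\mathcal R\to$ measurements, expected score $S(r;\rho)=\sum_y\langle\mu(r)_y,\rho\rangle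 s(r,y)$; $S$ elicits $\Gamma$ if $\{\Gamma(\rho)\}=\arg\max_{r}S(r;\rho)$ for all $\rho$. A classical scoring rule $\hat s:\mathcal R\times\mathcal Y\to\mathbb R$ elicits $\Gamma^\diamond$ on $\mathcal P^\diamond$ if $\{\Gamma^\diamond(p)\}=\arg\max_r\sum_yp_y\hat s(r,y)$ for all $p\in\mathcal P^\diamond$. $\Gamma:\mathrm{Dens}(\mathcal X)\to\mathbb R^k$ is identifiable if for each $r$ in its range there is $V(r)\in\mathrm{Herm}(\mathcal X)^k$ with $\Gamma(\rho)=r\iff(\langle V(r)_i,\rho\rangle)_{i=1}^k=0$ for all $\rho$; a classical $\Gamma^\diamond:\mathcal P^\diamond\to\mathbb R^k$ is identifiable if for each $r$ in its range there is $v(r)\in\mathbb R^{k\times\mathcal Y}$ with $\Gamma^\diamond(p)=r\iff v(r)p=0$ for all $p\in\mathcal P^\diamond$. *)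

(* Defs.v *)
From HB Require Import structures.
From mathcomp Require Import all_boot all_order all_algebra.
From mathcomp Require Import complex.
Set Implicit Arguments. Unset Strict Implicit. Unset Printing Implicit Defensive.
Import Order.TTheory GRing.Theory Num.Theory.
Local Open Scope ring_scope.

Section QDefs.
Variable R : rcfType.
Local Notation C := (R[i]).

Definition adjmx n (A : 'M[C]_n) : 'M[C]_n := (map_mx Num.conj A)^T.

Definition herm_mx n (A : 'M[C]_n) : Prop := adjmx A = A.

(* <X, Y> = Tr(X^* Y); for Hermitian X, Y this is real, and we take its
   real part as an element of R *)
Definition hip n (A B : 'M[C]_n) : R := @complex.Re R (\tr (adjmx A *m B)).

Definition psd n (A : 'M[C]_n) : Prop :=
  forall v : 'cV[C]_n, 0 <= ((map_mx Num.conj v)^T *m A *m v) ord0 ord0.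

Definition density n (rho : 'M[C]_n) : Prop := psd rho /\ \tr rho = 1.

Definition measurement n (Y : finType) (mu : Y -> 'M[C]_n) : Prop :=
  (forall y, psd (mu y)) /\ \sum_y mu y = 1%:M.

Definition tomo_complete n (Y : finType) (mu : Y -> 'M[C]_n) : Prop :=
  measurement mu /\
  forall H : 'M[C]_n, herm_mx H ->
    exists c : Y -> R, H = \sum_y ((c y)%:C)%C *: mu y.

Definition phi n (Y : finType) (mu : Y -> 'M[C]_n) (X : 'M[C]_n) : Y -> R :=
  fun y => hip (mu y) X.

Definition Pdiamond n (Y : finType) (mu : Y -> 'M[C]_n) (p : Y -> R) : Prop :=
  exists rho, density rho /\ p = phi mu rho.

(* ---- quantum scores ----
   A quantum score S = (s, mu): for each report r, mu r is a measurement with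
   outcomes in nat; we take it with finitely many outcomes 0 .. m r - 1. *)
Definition quantum_measurement n (m : nat) (mu : nat -> 'M[C]_n) : Prop :=
  (forall y, (y < m)%N -> psd (mu y)) /\ \sum_(y < m) mu y = 1%:M.

Definition qscore_expected n (Rep : Type) (s : Rep -> nat -> R)
  (m : Rep -> nat) (mu : Rep -> nat -> 'M[C]_n) (r : Rep) (rho : 'M[C]_n) : R :=
  \sum_(y < m r) hip (mu r y) rho * s r y.

Definition qscore_elicits n (Rep : Type) (s : Rep -> nat -> R)
  (m : Rep -> nat) (mu : Rep -> nat -> 'M[C]_n) (Gamma : 'M[C]_n -> Rep) : Prop :=
  forall rho, density rho -> forall r, r <> Gamma rho ->
    qscore_expected s m mu r rho < qscore_expected s m mu (Gamma rho) rho.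

Definition q_elicitable n (Rep : Type) (Gamma : 'M[C]_n -> Rep) : Prop :=
  exists (s : Rep -> nat -> R) (m : Rep -> nat) (mu : Rep -> nat -> 'M[C]_n),
    (forall r, quantum_measurement (m r) (mu r)) /\ qscore_elicits s m mu Gamma.

Definition c_elicitable n (Y : finType) (mu : Y -> 'M[C]_n) (Rep : Type)
  (G : (Y -> R) -> Rep) : Prop :=
  exists shat : Rep -> Y -> R,
    forall p, Pdiamond mu p -> forall r, r <> G p ->
      \sum_y p y * shat r y < \sum_y p y * shat (G p) y.

Definition q_identifiable n k (Gamma : 'M[C]_n -> 'rV[R]_k) : Prop :=
  forall r, (exists rho0, density rho0 /\ Gamma rho0 = r) ->
    exists V : 'I_k -> 'M[C]_n, (forall i, herm_mx (V i)) /\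
      forall rho, density rho ->
        (Gamma rho = r <-> forall i, hip (V i) rho = 0).

Definition c_identifiable n (Y : finType) (mu : Y -> 'M[C]_n) k
  (G : (Y -> R) -> 'rV[R]_k) : Prop :=
  forall r, (exists p0, Pdiamond mu p0 /\ G p0 = r) ->
    exists v : 'I_k -> Y -> R,
      forall p, Pdiamond mu p ->
        (G p = r <-> forall i, \sum_y v i y * p y = 0).

End QDefs.

(* Main.v *)
Require Import Defs.
From HB Require Import structures.
From mathcomp Require Import all_boot all_order all_algebra.
From mathcomp Require Import complex.
From mathcomp Require Import ring.
Import Order.TTheory GRing.Theory Num.Theory.
Local Open Scope ring_scope.
Local Open Scope complex_scope.
Local Open Scope ring_scope.
Lemma alg_herm (F : numFieldType) (I d1 d2 x y xc yc : F) : I*I = -1 ->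
  d1 + xc + yc + d2 = d1 + x + y + d2 ->
  d1 + -I*xc + - - I*yc + - - I * - I * d2 = d1 + I*x + -I*y + -I*I*d2 -> xc = y.
Proof.
move=> hI /eqP; rewrite -subr_eq0 => /eqP E1 /eqP; rewrite -subr_eq0 => /eqP E2.
apply/eqP; rewrite -subr_eq0; apply/eqP.
have -> : xc - y = 2^-1 * (((d1 + xc + yc + d2) - (d1 + x + y + d2)) +
   I * ((d1 + -I*xc + - - I*yc + - - I * - I * d2) - (d1 + I*x + -I*y + -I*I*d2))
   + (I*I+1)*(xc-yc+x-y)).
  by field.
by rewrite E1 E2 hI mulr0 addNr mul0r !addr0 mulr0.
Qed.

Section S.
Variable R : rcfType.
Local Notation C := (R[i]).
Variable n : nat.
Definition qf (A : 'M[C]_n) (v : 'cV[C]_n) := ((map_mx Num.conj v)^T *m A *m v) ord0 ord0.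
Local Notation e j := (delta_mx j (@ord0 0) : 'cV[C]_n).

Lemma delta_mid (A : 'M[C]_n) j k : (delta_mx (@ord0 0) j *m A *m delta_mx k (@ord0 0)) = (A j k)%:M.
Proof. by apply/matrixP => x y; rewrite -rowE -colE !mxE !ord1 eqxx mulr1n. Qed.

Lemma qf_comb A (a b : C) j k : qf A (a *: e j + b *: e k) =
  a^* * a * A j j + a^* * b * A j k + b^* * a * A k j + b^* * b * A k k.
Proof.
rewrite /qf.
have -> : map_mx Num.conj (a *: e j + b *: e k) = a^* *: e j + b^* *: e k.
  apply/matrixP => x y; rewrite !mxE rmorphD !rmorphM /=.
  by rewrite !rmorph_nat.
rewrite linearD /= !linearZ /= [(_ + _)^T]linearD /= ![(_ *: _)^T]linearZ /= !trmx_delta.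
rewrite !mulmxDl -!scalemxAl !delta_mid !mxE eqxx !mulr1n.
ring.
Qed.

Lemma conj_i : ('i%C : C)^* = - 'i%C.
Proof. by apply/eqP; rewrite eq_complex /= oppr0 !eqxx. Qed.
Lemma i_sq : ('i%C : C) * 'i%C = -1.
Proof. by rewrite -expr2 sqr_i. Qed.

Lemma psd_qf (A : 'M[C]_n) : psd A -> forall v, (qf A v)^* = qf A v.
Proof. by move=> HA v; apply: geC0_conj; apply: HA. Qed.

Lemma psd_herm (A : 'M[C]_n) : psd A -> herm_mx A.
Proof.
move=> /psd_qf HA.
have Hd j : (A j j)^* = A j j.
  have := HA (1 *: e j + 0 *: e j); rewrite qf_comb !rmorph0 !rmorph1 !(mul0r, mulr0, mul1r, addr0).
  done.
apply/matrixP => p q; rewrite !mxE.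
set x := A q p; set y := A p q.
have E1 := HA (1 *: e q + 1 *: e p).
rewrite qf_comb !rmorph1 !mul1r !rmorphD /= in E1. rewrite !Hd in E1.
have E2 := HA (1 *: e q + 'i%C *: e p).
rewrite qf_comb !rmorph1 !(mul1r, mulr1) conj_i !rmorphD /= !rmorphM /= ?rmorphN /= conj_i !Hd in E2.
exact: (@alg_herm _ _ _ _ _ _ _ _ i_sq E1 E2).
Qed.

Lemma conj_realC (c : R) : (c%:C : C)^* = c%:C.
Proof. by apply/eqP; rewrite eq_complex /= oppr0 !eqxx. Qed.

Lemma ReD (a b : C) : complex.Re (a + b) = complex.Re a + complex.Re b.
Proof. by case: a; case: b. Qed.
Lemma ReZ (c : R) (a : C) : complex.Re (c%:C * a) = c * complex.Re a.
Proof. by case: a => a1 a2 /=; rewrite mul0r subr0. Qed.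

Lemma adjmxD (A B : 'M[C]_n) : adjmx (A + B) = adjmx A + adjmx B.
Proof. by rewrite /adjmx map_mxD linearD. Qed.
Lemma adjmx0 : adjmx (0 : 'M[C]_n) = 0.
Proof. by rewrite /adjmx map_mx0 trmx0. Qed.
Lemma adjmxZ (c : R) (A : 'M[C]_n) : adjmx (c%:C *: A) = c%:C *: adjmx A.
Proof.
rewrite /adjmx -linearZ /=; congr (_^T); apply/matrixP => x y.
by rewrite !mxE rmorphM /= conj_realC.
Qed.

Lemma hipD (A B M : 'M[C]_n) : hip (A + B) M = hip A M + hip B M.
Proof. by rewrite /hip adjmxD mulmxDl mxtraceD ReD. Qed.
Lemma hip0 (M : 'M[C]_n) : hip 0 M = 0.
Proof. by rewrite /hip adjmx0 mul0mx mxtrace0. Qed.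
Lemma hipZ (c : R) (A M : 'M[C]_n) : hip (c%:C *: A) M = c * hip A M.
Proof. by rewrite /hip adjmxZ -scalemxAl mxtraceZ ReZ. Qed.

Lemma hip_sum (Y : finType) (c : Y -> R) (F : Y -> 'M[C]_n) M :
  hip (\sum_y (c y)%:C *: F y) M = \sum_y c y * hip (F y) M.
Proof.
rewrite (big_morph (fun A => hip A M) (fun A B => hipD A B M) (hip0 M)).
by apply: eq_bigr => y _; rewrite hipZ.
Qed.

Lemma herm_sum (Y : finType) (c : Y -> R) (F : Y -> 'M[C]_n) :
  (forall y, herm_mx (F y)) -> herm_mx (\sum_y (c y)%:C *: F y).
Proof.
move=> HF; rewrite /herm_mx.
apply: (big_ind (fun A => adjmx A = A)).
- exact: adjmx0.
- by move=> A B HA HB; rewrite adjmxD HA HB.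
- by move=> y _; rewrite adjmxZ HF.
Qed.
End S.

From Stdlib Require Import ClassicalEpsilon.

Section Main.
Variables (R : rcfType) (n : nat) (Y : finType) (mu0 : Y -> 'M[R[i]]_n)
  (psi : (Y -> R) -> 'M[R[i]]_n).
Hypothesis Htc : tomo_complete mu0.
Hypothesis Hpsi : forall X : 'M[R[i]]_n, herm_mx X -> psi (phi mu0 X) = X.

Lemma density_herm (rho : 'M[R[i]]_n) : density rho -> herm_mx rho.
Proof. by case=> /psd_herm. Qed.

Lemma psi_phi rho : density rho -> psi (phi mu0 rho) = rho.
Proof. by move=> /density_herm /Hpsi. Qed.

Lemma mu0_herm y : herm_mx (mu0 y).
Proof. by case: Htc => [[Hp _] _]; apply: psd_herm. Qed.

Lemma decomp (H : 'M[R[i]]_n) : herm_mx H ->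
  exists c : Y -> R, forall rho, hip H rho = \sum_y c y * phi mu0 rho y.
Proof.
case: Htc => _ Hc /Hc [c ->]; exists c => rho; exact: hip_sum.
Qed.

Lemma decomp_fun (T : Type) (P : T -> Prop) (H : T -> 'M[R[i]]_n) :
  (forall t, P t -> herm_mx (H t)) ->
  exists c : T -> Y -> R, forall t, P t -> forall rho,
      hip (H t) rho = \sum_y c t y * phi mu0 rho y.
Proof.
move=> HH.
have ex t : exists c : Y -> R, P t -> forall rho, hip (H t) rho = \sum_y c y * phi mu0 rho y.
  case: (classic (P t)) => [Pt|nP].
    by have [c Hc] := decomp _ (HH t Pt); exists c.
  by exists (fun _ => 0).
exists (fun t => proj1_sig (constructive_indefinite_description _ (ex t))).
move=> t; exact: (proj2_sig (constructive_indefinite_description _ (ex t))).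
Qed.
End Main.
Arguments psi_phi {R n Y mu0 psi}.
Arguments decomp_fun {R n Y mu0} Htc {T}.
Arguments mu0_herm {R n Y mu0}.

Theorem proposition6p2 (R : rcfType) (n : nat) (Y : finType)
  (mu0 : Y -> 'M[R[i]]_n) (psi : (Y -> R) -> 'M[R[i]]_n) :
  tomo_complete mu0 ->
  (forall X : 'M[R[i]]_n, herm_mx X -> psi (phi mu0 X) = X) ->
  (forall (Rep : Type) (Gamma : 'M[R[i]]_n -> Rep),
      q_elicitable Gamma <-> c_elicitable mu0 (fun p => Gamma (psi p))) /\
  (forall (k : nat) (Gamma : 'M[R[i]]_n -> 'rV[R]_k),
      q_identifiable Gamma <-> c_identifiable mu0 (fun p => Gamma (psi p))).
Proof.
move=> Htc Hpsi.
have Hpp := psi_phi Hpsi.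
split.
  move=> Rep Gamma; split.
    move=> [s [m [mu [Hm Hel]]]].
    have HH : forall ry : Rep * nat, (ry.2 < m ry.1)%N -> herm_mx (mu ry.1 ry.2).
      by move=> [r y] /= Hy; apply: psd_herm; exact: (Hm r).1 y Hy.
    have [cf Hcf] := decomp_fun Htc _ _ HH.
    exists (fun r z => \sum_(y < m r) cf (r, val y) z * s r y).
    have Hexp r rho : qscore_expected s m mu r rho =
       \sum_z phi mu0 rho z * (\sum_(y < m r) cf (r, val y) z * s r y).
      rewrite /qscore_expected.
      under eq_bigr => y _ do rewrite (Hcf (r, val y) (ltn_ord y)) /= mulr_suml.
      rewrite exchange_big; apply: eq_bigr => z _; rewrite mulr_sumr.
      by apply: eq_bigr => y _; rewrite mulrCA mulrA.
    move=> p [rho [Hrho ->]] r Hne; rewrite Hpp // in Hne *.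
    rewrite -!Hexp; exact: Hel.
  move=> [shat Hsh].
  pose mu (r : Rep) (y : nat) : 'M_n :=
    if insub y is Some i then mu0 (enum_val (i : 'I_#|Y|)) else 0.
  pose s r y := if insub y is Some i then shat r (enum_val (i : 'I_#|Y|)) else 0.
  exists s, (fun _ => #|Y|), mu; split.
    move=> r; split.
      move=> y Hy; rewrite /mu insubT /=; case: Htc => [[Hp _] _]; exact: Hp.
    rewrite (eq_bigr (fun i => mu0 (enum_val i))) => [|i _]; last by rewrite /mu valK.
    rewrite -big_enum_val /=.
    by case: Htc => [[_ Hs] _]; rewrite -Hs; apply: eq_bigl.
  move=> rho Hrho r Hne.
  have E r' : qscore_expected s (fun=> #|Y|) mu r' rho =
      \sum_y phi mu0 rho y * shat r' y.
    rewrite /qscore_expected (eq_bigr (fun i => phi mu0 rho (enum_val i) * shat r' (enum_val i))) => [|i _]; last by rewrite /mu /s valK.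
    by rewrite -(big_enum_val (fun y => phi mu0 rho y * shat r' y)).
  rewrite !E.
  have := Hsh (phi mu0 rho) (ex_intro _ rho (conj Hrho erefl)).
  rewrite Hpp //; apply; exact: Hne.
move=> k Gamma; split.
  move=> HI r [p0 [[rho0 [Hr0 ->]] Hg]].
  rewrite Hpp // in Hg.
  have [V [HV HVe]] := HI r (ex_intro _ rho0 (conj Hr0 Hg)).
  have [c Hc] := decomp_fun Htc (fun _ : 'I_k => True) V (fun i _ => HV i).
  exists c => p [rho [Hrho ->]]; rewrite Hpp // HVe //.
  by split=> H i; [rewrite -(Hc i I rho) H | rewrite (Hc i I rho) H].
move=> HI r [rho0 [Hr0 Hg]].
have Hp0 : Pdiamond mu0 (phi mu0 rho0) /\ Gamma (psi (phi mu0 rho0)) = r.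
  by split; [exists rho0 | rewrite Hpp].
have [v Hv] := HI r (ex_intro _ _ Hp0).
exists (fun i => \sum_y ((v i y)%:C)%C *: mu0 y); split.
  by move=> i; apply: herm_sum => y; apply: mu0_herm.
move=> rho Hrho.
have := Hv (phi mu0 rho) (ex_intro _ rho (conj Hrho erefl)); rewrite Hpp // => ->.
have Hs i : hip (\sum_y ((v i y)%:C)%C *: mu0 y) rho = \sum_y v i y * phi mu0 rho y.
  exact: hip_sum.
by split=> H i; [exact: (etrans (Hs i) (H i)) | exact: (etrans (esym (Hs i)) (H i))].
Qed.
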